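(* Let $X=\{v_1,\dots,v_n\}$, let $w:X\to\mathbb{R}^+$, and let $g:2^X\to\mathbb{R}^+$ be monotone nondecreasing with $g(\emptyset)=0$. Let $\delta=\min\{g(C\cup\{v\})-g(C): C\subset X, v\in X\setminus C, g(C\cup\{v\})>g(C)\}$. Identify subsets of $X$ with vectors $\mathbf{x}\in\{0,1\}^n$ and define $f_1(\mathbf{x})=\left\lfloor \frac{g(X)-g(\mathbf{x})}{\delta}\right\rfloor\delta$ and $f_2(\mathbf{x})=w(\mathbf{x})=\sum_{x\in\mathbf{x}}w(x)$. Let $\beta=\left\lfloor\frac{g(X)-g(\emptyset)}{\delta}\right\rfloor$. Then throughout the run of GSEMO (as described in the context) on the bi-objective function $(f_1,f_2)$, the population satisfies $|P|\le\beta+1$.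
   Context: Both objectives are to be minimized. $\mathbf{x}'$ weakly dominates $\mathbf{x}$ ($\mathbf{x}'\succeq\mathbf{x}$) if $f_1(\mathbf{x}')\le f_1(\mathbf{x})$ and $f_2(\mathbf{x}')\le f_2(\mathbf{x})$; $\mathbf{x}'$ dominates $\mathbf{x}$ ($\mathbf{x}'\succ\mathbf{x}$) if additionally one of the inequalities is strict. GSEMO: start with population $P=\{\mathbf{0}\}$; in each iteration $t=1,\dots,T$, select $\mathbf{x}\in P$ uniformly at random, generate $\mathbf{x}'$ by flipping each bit of $\mathbf{x}$ independently with probability $1/n$; if no $\mathbf{z}\in P$ satisfies $\mathbf{z}\succ\mathbf{x}'$, set $P\leftarrow (P\setminus\{\mathbf{z}\in P:\mathbf{x}'\succeq\mathbf{z}\})\cup\{\mathbf{x}'\}$. At the end it returns $\arg\min\{f_2(\mathbf{x}):\mathbf{x}\in P, f_1(\mathbf{x})=0\}$ if such an individual exists. *)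

(* Defs.v *)
From HB Require Import structures.
From mathcomp Require Import all_boot all_order all_algebra.
Set Implicit Arguments. Unset Strict Implicit. Unset Printing Implicit Defensive.
Import Order.TTheory GRing.Theory Num.Theory.
Local Open Scope ring_scope.

(* Ground set X = 'I_n ; subsets of X = {set 'I_n} (= bit vectors in {0,1}^n). *)

Section GSEMO.
Variables (R : archiRealFieldType) (n : nat).
Variables (g : {set 'I_n} -> R) (w : 'I_n -> R) (delta : R).

Definition f1 (x : {set 'I_n}) : R :=
  (Num.floor ((g setT - g x) / delta))%:~R * delta.

Definition f2 (x : {set 'I_n}) : R := \sum_(i in x) w i.

Definition weakly_dominates (x' x : {set 'I_n}) : bool :=
  (f1 x' <= f1 x) && (f2 x' <= f2 x).
Definition dominates (x' x : {set 'I_n}) : bool :=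
  weakly_dominates x' x && ((f1 x' < f1 x) || (f2 x' < f2 x)).

Definition gsemo_update (P : {set {set 'I_n}}) (x' : {set 'I_n}) :
    {set {set 'I_n}} :=
  if [exists z in P, dominates z x'] then P
  else x' |: [set z in P | ~~ weakly_dominates x' z].

Definition flip (x F : {set 'I_n}) : {set 'I_n} := (x :\: F) :|: (F :\: x).

(* Populations that can occur during some run of GSEMO: start from {0};
   in each iteration some x in P is selected and some set F of bits is
   flipped (every F has positive probability under standard bit mutation). *)
Inductive gsemo_reachable : {set {set 'I_n}} -> Prop :=
| gsemo_init : gsemo_reachable [set set0]
| gsemo_step P x F : gsemo_reachable P -> x \in P ->
    gsemo_reachable (gsemo_update P (flip x F)).

End GSEMO.

Definition is_min_marginal_gain (R : archiRealFieldType) (n : nat)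
    (g : {set 'I_n} -> R) (delta : R) : Prop :=
  (exists (C : {set 'I_n}) (v : 'I_n),
      v \notin C /\ g C < g (v |: C) /\ delta = g (v |: C) - g C) /\
  (forall (C : {set 'I_n}) (v : 'I_n),
      v \notin C -> g C < g (v |: C) -> delta <= g (v |: C) - g C).

(* Main.v *)
Require Import Defs.
From mathcomp Require Import all_boot all_order all_algebra.
Import Order.TTheory GRing.Theory Num.Theory.
Local Open Scope ring_scope.

Lemma wd_not_dom (R : archiRealFieldType) (n : nat)
    (g : {set 'I_n} -> R) (w : 'I_n -> R) (delta : R) a b :
  weakly_dominates g w delta a b -> ~~ dominates g w delta a b ->
  weakly_dominates g w delta b a.
Proof.
rewrite /dominates /weakly_dominates => /andP[h1 h2].
rewrite h1 h2 /= negb_or -!leNgt => /andP[-> ->] //.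
Qed.

Lemma reach_inv (R : archiRealFieldType) (n : nat)
    (g : {set 'I_n} -> R) (w : 'I_n -> R) (delta : R) P :
  gsemo_reachable g w delta P ->
  forall a b, a \in P -> b \in P -> a != b -> ~~ weakly_dominates g w delta a b.
Proof.
elim=> [|Q x F _ IH _] a b.
  by rewrite !in_set1 => /eqP -> /eqP ->; rewrite eqxx.
rewrite /gsemo_update; case: ifP => [_|]; first exact: IH.
move/negbT/existsPn => H.
rewrite !in_setU1 !in_set.
case/orP=> [/eqP ->|/andP[aQ na]]; case/orP=> [/eqP ->|/andP[bQ nb]].
- by rewrite eqxx.
- by [].
- move=> _; apply/negP => wa.
  have := H a; rewrite aQ /= => nd.
  by move: na; rewrite (@wd_not_dom _ _ _ _ _ _ _ wa nd).
- exact: IH.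
Qed.

Theorem lemma1 (R : archiRealFieldType) (n : nat)
    (w : 'I_n -> R) (g : {set 'I_n} -> R) (delta : R)
    (hw : forall i, 0 < w i)
    (hg_nonneg : forall A, 0 <= g A)
    (hg_mono : forall A B : {set 'I_n}, A \subset B -> g A <= g B)
    (hg0 : g set0 = 0)
    (hdelta : is_min_marginal_gain g delta)
    (P : {set {set 'I_n}}) :
  gsemo_reachable g w delta P ->
  (#|P| <= `|Num.floor ((g setT - g set0) / delta)|%N + 1)%N.
Proof.
move=> hP.
have dpos : 0 < delta.
  by case: hdelta => [[C [v [_ [lt ->]]]] _]; rewrite subr_gt0.
have inv := @reach_inv _ _ _ _ _ _ hP.
set k := fun x : {set 'I_n} => Num.floor ((g setT - g x) / delta).
set b := `|Num.floor ((g setT - g set0) / delta)|%N.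
have k0 : forall x, 0 <= k x.
  move=> x; rewrite /k floor_ge0 divr_ge0 ?(ltW dpos) // subr_ge0.
  exact: hg_mono (subsetT _).
have kb : forall x, (`|k x|%N <= b)%N.
  move=> x; rewrite -lez_nat gez0_abs ?k0 // gez0_abs; last first.
    by rewrite floor_ge0 divr_ge0 ?(ltW dpos) // subr_ge0; exact: hg_mono (subsetT _).
  apply: le_floor; apply: ler_wpM2r; first by rewrite invr_ge0 ltW.
  by rewrite lerD2l lerN2; apply: hg_mono; rewrite sub0set.
pose h := fun x => (inord `|k x|%N : 'I_b.+1).
have hinj : {in P &, injective h}.
  move=> x y xP yP /(congr1 val); rewrite /h /= !inordK ?ltnS ?kb // => e.
  have ekk : k x = k y by rewrite -(gez0_abs (k0 x)) -(gez0_abs (k0 y)) e.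
  have ef : f1 g delta x = f1 g delta y by rewrite /f1 -/(k x) -/(k y) ekk.
  apply/eqP; apply/negPn/negP => nxy.
  have := inv _ _ xP yP nxy; have := inv _ _ yP xP.
  rewrite eq_sym nxy => /(_ isT).
  rewrite /weakly_dominates ef lexx /=.
  by case/orP: (le_total (f2 w x) (f2 w y)) => -> .
rewrite addn1 -(card_in_imset hinj).
by apply: leq_trans (max_card _) _; rewrite card_ord.
Qed.
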